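(* For every analytic set $S\subseteq(0;1)$ there is a solid closed set $A\subseteq 2^{\omega}$ such that $\operatorname{ran}\mathcal{D}_A=\{0,1\}\cup S$, and there is also a solid open set $A'\subseteq 2^{\omega}$ such that $\operatorname{ran}\mathcal{D}_{A'}=\{0,1\}\cup S$.
   Context: $2^{\omega}$ is the Cantor space of infinite binary sequences with the product topology; for a finite binary sequence $s$ let $N_s=\{x\in 2^\omega: s\subset x\}$. $\mu$ is the coin-tossing probability measure on $2^\omega$, i.e. the unique Borel probability measure with $\mu(N_s)=2^{-\mathrm{lh}(s)}$. For a measurable $A\subseteq 2^\omega$ and $z\in 2^\omega$, the density of $A$ at $z$ is $\mathcal{D}_A(z)=\lim_{n\to\infty}\mu(A\cap N_{z\restriction n})/\mu(N_{z\restriction n})$, defined only when the limit exists; $\operatorname{ran}\mathcal{D}_A$ is the set of values $\mathcal{D}_A(z)$ over all $z$ at which the limit exists. A point $z$ is blurry for $A$ if $\mathcal{D}_A(z)$ does not exist. $A$ is solid if no point of $2^\omega$ is blurry for $A$. *)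

(* Defs.v *)
From HB Require Import structures.
From mathcomp Require Import all_boot all_order all_algebra.
From mathcomp Require Import all_classical all_reals all_analysis.
Set Implicit Arguments. Unset Strict Implicit. Unset Printing Implicit Defensive.
Import Order.TTheory GRing.Theory Num.Theory numFieldNormedType.Exports.
Local Open Scope classical_set_scope.
Local Open Scope ring_scope.

Definition cantor := nat -> bool.

Definition cyl (s : seq bool) : set cantor :=
  [set x | forall i, (i < size s)%N -> x i = nth false s i].

Definition restr (z : cantor) (n : nat) : seq bool := mkseq z n.

(* The set of cylinders; the sigma-algebra it generates is the Borel
   sigma-algebra of the product topology on 2^omega. *)
Definition cylinders : set (set cantor) := range cyl.

Definition cantorB := g_sigma_algebraType cylinders.

(* Product topology on 2^omega, written out via its basis of cylinders. *)
Definition c_open (A : set cantor) : Prop :=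
  forall x, A x -> exists n, cyl (restr x n) `<=` A.
Definition c_closed (A : set cantor) : Prop := c_open (~` A).

Definition dens_ratio (R : realType) (mu : set cantorB -> \bar R)
  (A : set cantor) (z : cantor) (n : nat) : R :=
  fine (mu (A `&` cyl (restr z n))) / fine (mu (cyl (restr z n))).

Definition density_is (R : realType) (mu : set cantorB -> \bar R)
  (A : set cantor) (z : cantor) (l : R) : Prop :=
  dens_ratio mu A z @ \oo --> l.

Definition ran_density (R : realType) (mu : set cantorB -> \bar R)
  (A : set cantor) : set R :=
  [set l | exists z, density_is mu A z l].

Definition blurry (R : realType) (mu : set cantorB -> \bar R)
  (A : set cantor) (z : cantor) : Prop :=
  ~ exists l, density_is mu A z l.

Definition solid (R : realType) (mu : set cantorB -> \bar R)
  (A : set cantor) : Prop := forall z, ~ blurry mu A z.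

(* Baire space omega^omega with the product topology (discrete nat);
   continuity of f : omega^omega -> R written out with the basic
   neighbourhoods {y | y agrees with x below n}. *)
Definition baire_continuous (R : realType) (f : (nat -> nat) -> R) : Prop :=
  forall (x : nat -> nat) (e : R), 0 < e ->
    exists n : nat, forall y : nat -> nat,
      (forall i, (i < n)%N -> y i = x i) -> `|f y - f x| < e.

Definition analytic (R : realType) (S : set R) : Prop :=
  S = set0 \/ exists f : (nat -> nat) -> R, baire_continuous f /\ range f = S.

Definition coin_tossing (R : realType) (mu : {measure set cantorB -> \bar R}) : Prop :=
  forall s : seq bool, mu (cyl s) = ((2 ^- size s : R))%:E.

(* Main.v *)
Require Import Defs.
From HB Require Import structures.
From mathcomp Require Import all_boot all_order all_algebra.
From mathcomp Require Import all_classical all_reals all_analysis.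
From mathcomp Require Import ring lra zify.
Set Implicit Arguments. Unset Strict Implicit. Unset Printing Implicit Defensive.
Import Order.TTheory GRing.Theory Num.Theory numFieldNormedType.Exports.


Definition step (st : seq nat * nat) (b : bool) : seq nat * nat :=
  if b then (st.1, st.2.+1) else (rcons st.1 st.2, 0).
Definition dec (u : seq bool) : seq nat := (foldl step ([::], 0) u).1.

Lemma fold_prefix st v : exists t, (foldl step st v).1 = st.1 ++ t.
Proof.
elim: v st => [|b v IH] st /=; first by exists [::]; rewrite cats0.
have [t ->] := IH (step st b); case: b => /=; first by exists t.
by exists (st.2 :: t); rewrite cat_rcons.
Qed.

Lemma dec_prefix u v : exists t, dec (u ++ v) = dec u ++ t.
Proof. by rewrite /dec foldl_cat; apply: fold_prefix. Qed.

Lemma fold_true st n : foldl step st (nseq n true) = (st.1, st.2 + n).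
Proof.
elim: n st => [|n IH] [t c] /=; first by rewrite addn0.
by rewrite IH /= addnS.
Qed.

Lemma dec_true u n : dec (u ++ nseq n true) = dec u.
Proof. by rewrite /dec foldl_cat fold_true. Qed.

Lemma fold_size st v : size (foldl step st v).1 = size st.1 + count negb v.
Proof.
elim: v st => [|b v IH] st /=; first by rewrite addn0.
by rewrite IH; case: b => /=; rewrite ?size_rcons; lia.
Qed.

Lemma dec_size u : size (dec u) = count negb u.
Proof. by rewrite /dec fold_size. Qed.

Lemma mkseq_add (T : Type) (w : nat -> T) a b :
  mkseq w (a + b) = mkseq w a ++ mkseq (fun i => w (a + i)) b.
Proof.
rewrite /mkseq iotaD map_cat add0n; congr (_ ++ _).
by rewrite -{1}(addn0 a) iotaDl -map_comp.
Qed.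

Lemma take_mkseq' (T : Type) (w : nat -> T) a b : (a <= b)%N -> take a (mkseq w b) = mkseq w a.
Proof.
move=> h; by rewrite -(subnKC h) mkseq_add take_cat size_mkseq ltnn subnn take0 cats0.
Qed.

Definition enc (l : seq nat) : seq bool := flatten (map (fun c => rcons (nseq c true) false) l).

Lemma enc_cat l1 l2 : enc (l1 ++ l2) = enc l1 ++ enc l2.
Proof. by rewrite /enc map_cat flatten_cat. Qed.

Lemma fold_enc l : foldl step ([::], 0) (enc l) = (l, 0).
Proof.
elim/last_ind: l => [//|l c IH].
rewrite -cats1 enc_cat foldl_cat IH /enc /= cats0 -cats1 foldl_cat fold_true /=.
by rewrite cats1.
Qed.

Lemma dec_enc l : dec (enc l) = l.
Proof. by rewrite /dec fold_enc. Qed.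

Lemma size_enc l : (size l <= size (enc l))%N.
Proof.
elim: l => [//|c l IH]; rewrite -cat1s enc_cat size_cat /=.
rewrite size_cat {1}/enc /= cats0 size_rcons; lia.
Qed.

Local Open Scope classical_set_scope.
Local Open Scope ring_scope.


Definition ext (s : seq bool) : cantor := fun i => nth false s i.

Fixpoint allseq (n : nat) : seq (seq bool) :=
  if n is n'.+1 then map (cons false) (allseq n') ++ map (cons true) (allseq n') else [:: [::]].

Lemma allseqP n s : size s = n -> s \in allseq n.
Proof.
elim: n s => [|n IH] [|b s] //= [hs].
have inj (b1 : bool) : injective (cons b1) by move=> x y [].
by rewrite mem_cat; case: b; rewrite (mem_map (inj _)) IH ?orbT.
Qed.

Definition determined (n : nat) (B : set cantor) :=
  forall y y', (forall i, (i < n)%N -> y i = y' i) -> B y -> B y'.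

Lemma cyl_restr (y : cantor) n : cyl (restr y n) y.
Proof. by move=> i; rewrite size_mkseq => hi; rewrite nth_mkseq. Qed.

Lemma cylE s y : cyl s y <-> (forall i, (i < size s)%N -> y i = ext s i).
Proof. by []. Qed.

Lemma cyl_meas (s : seq bool) : measurable (cyl s : set cantorB).
Proof. by apply: sub_sigma_algebra; exists s. Qed.

Lemma det_meas n (B : set cantor) : determined n B -> measurable (B : set cantorB).
Proof.
move=> hB.
have -> : B = \big[setU/set0]_(s <- allseq n) (cyl s `&` [set _ : cantor | B (ext s) /\ size s = n]).
  apply/seteqP; split => y.
    move=> By; rewrite -bigcup_seq; exists (restr y n).
      by rewrite /= allseqP // size_mkseq.
    split; first exact: cyl_restr.
    split; last by rewrite size_mkseq.
    apply: (hB y) => // i hi; by rewrite /ext nth_mkseq.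
  rewrite -bigcup_seq => -[s _ [hy [hs hsz]]].
  apply: (hB (ext s)) => // i hi; rewrite (hy i) //; by rewrite hsz.
apply: bigsetU_measurable => s _; apply: measurableI; first exact: cyl_meas.
have [h|h] := pselect (B (ext s) /\ size s = n).
  by rewrite (_ : [set _ | _] = setT) //; apply/seteqP; split.
by rewrite (_ : [set _ | _] = set0) //; apply/seteqP; split.
Qed.


Section Meas.
Variables (R : realType) (mu : {measure set cantorB -> \bar R}).
Hypothesis hmu : coin_tossing mu.

Definition mr (B : set cantor) : R := fine (mu B).

Lemma cyl_nil : cyl [::] = setT.
Proof. by apply/seteqP; split => // y _ i. Qed.

Lemma mu_fin {B : set cantor} : measurable (B : set cantorB) ->
  mu B = (mr B)%:E /\ 0 <= mr B <= 1.
Proof.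
move=> mB.
have h1 : (mu B <= 1)%E.
  have := hmu [::]; rewrite cyl_nil /= expr0 invr1 => <-.
  by apply: le_measure => //; rewrite inE.
have h0 : (0 <= mu B)%E by apply: measure_ge0.
have hf : mu B \is a fin_num by rewrite ge0_fin_numE // (le_lt_trans h1) // ltry.
split; first by rewrite /mr fineK.
by rewrite /mr fine_ge0 //= -lee_fin fineK.
Qed.

Lemma mr_ge0 B : measurable (B : set cantorB) -> 0 <= mr B.
Proof. by move=> /mu_fin [_ /andP[]]. Qed.

Lemma mr_le1 B : measurable (B : set cantorB) -> mr B <= 1.
Proof. by move=> /mu_fin [_ /andP[]]. Qed.

Lemma mr_le B C : measurable (B : set cantorB) -> measurable (C : set cantorB) ->
  B `<=` C -> mr B <= mr C.
Proof.
move=> mB mC BC; have [hB _] := mu_fin mB; have [hC _] := mu_fin mC.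
rewrite -lee_fin -hB -hC; apply: le_measure => //; rewrite inE //.
Qed.

Lemma mrU B C : measurable (B : set cantorB) -> measurable (C : set cantorB) ->
  B `&` C = set0 -> mr (B `|` C) = mr B + mr C.
Proof.
move=> mB mC BC; have [hB _] := mu_fin mB; have [hC _] := mu_fin mC.
have mBC : measurable (B `|` C : set cantorB) by apply: measurableU.
have [hBC _] := mu_fin mBC.
have := @measureU _ _ _ mu B C mB mC BC => h.
by apply: EFin_inj; rewrite EFinD -hB -hC -hBC; exact: h.
Qed.

Lemma mr_cyl s : mr (cyl s) = 2 ^- size s.
Proof. by rewrite /mr hmu. Qed.

Lemma cyl_rcons s b y : cyl (rcons s b) y <-> cyl s y /\ y (size s) = b.
Proof.
split.
  move=> h; split.
    by move=> i hi; rewrite (h i) ?nth_rcons ?hi // size_rcons ltnS ltnW.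
  by rewrite (h (size s)) ?nth_rcons ?ltnn ?eqxx // size_rcons.
move=> [h hb] i; rewrite size_rcons ltnS leq_eqVlt nth_rcons => /orP[/eqP ->|hi].
  by rewrite ltnn eqxx.
by rewrite hi h.
Qed.

Lemma cyl_split s : cyl s = cyl (rcons s false) `|` cyl (rcons s true).
Proof.
apply/seteqP; split => y.
  move=> hy; case hb: (y (size s)); [right|left]; apply/cyl_rcons; by split.
by case=> /cyl_rcons [].
Qed.

Lemma cyl_disj s : cyl (rcons s false) `&` cyl (rcons s true) = set0.
Proof.
apply/seteqP; split => // y [/cyl_rcons [_ h1] /cyl_rcons [_ h2]].
by rewrite h1 in h2.
Qed.

Definition D (B : set cantor) (s : seq bool) : R := mr (B `&` cyl s) * 2 ^+ size s.

Lemma D_split B s : measurable (B : set cantorB) ->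
  D B s = (D B (rcons s false) + D B (rcons s true)) / 2.
Proof.
move=> mB; rewrite /D !size_rcons.
rewrite {1}cyl_split setIUr mrU; first last.
- by rewrite setIACA cyl_disj setI0.
- by apply: measurableI => //; apply: cyl_meas.
- by apply: measurableI => //; apply: cyl_meas.
by rewrite exprS; field.
Qed.

Lemma D_bounds B s : measurable (B : set cantorB) -> 0 <= D B s <= 1.
Proof.
move=> mB; have mBs : measurable (B `&` cyl s : set cantorB) by apply: measurableI => //; apply: cyl_meas.
rewrite /D; apply/andP; split.
  by rewrite mulr_ge0 ?mr_ge0 // exprn_ge0.
have : mr (B `&` cyl s) <= 2 ^- size s.
  by rewrite -mr_cyl; apply: mr_le => //; apply: cyl_meas.
rewrite -[X in _ <= X -> _](mulr1) ler_pdivlMl ?exprn_gt0 // mulrC; apply.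
Qed.

Lemma dens_ratioE B z n : dens_ratio mu B z n = D B (restr z n).
Proof.
by rewrite /dens_ratio /D -/(mr _) -/(mr (cyl _)) mr_cyl size_mkseq invrK.
Qed.
End Meas.


Lemma mkseq_cons T (f : nat -> T) n : mkseq f n.+1 = f 0%N :: mkseq (fun i => f i.+1) n.
Proof. by rewrite /mkseq /= -add1n iotaDl -map_comp. Qed.

Definition bitsF (y : cantor) (a M : nat) : seq bool := mkseq (fun i => y (a + i)%N) M.

Lemma bitsF_det y y' a M : (forall i, (i < a + M)%N -> y i = y' i) -> bitsF y a M = bitsF y' a M.
Proof.
move=> h; apply: (@eq_from_nth _ false); rewrite ?size_mkseq // => i hi.
by rewrite !nth_mkseq // h // ltn_add2l.
Qed.

Lemma bitsF_S y a M : bitsF y a M.+1 = y a :: bitsF y a.+1 M.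
Proof.
by rewrite /bitsF mkseq_cons addn0; congr (_ :: _); apply: eq_mkseq => i; rewrite addSnnS.
Qed.

Section Fill.
Variables (R : realType) (mu : {measure set cantorB -> \bar R}).
Hypothesis hmu : coin_tossing mu.

Fixpoint fillP (q : R) (bs : seq bool) : bool :=
  if bs is b :: bs' then fillP (2 * q - b%:R) bs' else (1 <= q).

Definition FS (r : seq bool) (q : R) (M : nat) : set cantor :=
  [set y | cyl r y /\ fillP q (bitsF y (size r) M)].

Definition clamp (q : R) : R := if q < 0 then 0 else if 1 < q then 1 else q.

Lemma clamp2 q : clamp (2 * q) + clamp (2 * q - 1) = 2 * clamp q.
Proof.
rewrite /clamp.
repeat (case: ltrP => ?).
all: lra.
Qed.

Lemma clamp01 q : 0 <= clamp q <= 1.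
Proof. rewrite /clamp; repeat (case: ltrP => ?); apply/andP; split; lra. Qed.

Lemma FS_meas r q M : measurable (FS r q M : set cantorB).
Proof.
apply: (@det_meas (size r + M)) => y y' h [hr hf]; split.
  by move=> i hi; rewrite -h ?hr // ltn_addr.
by rewrite -(@bitsF_det y y' _ _ h).
Qed.

Lemma FS_sub r q M : FS r q M `<=` cyl r.
Proof. by move=> y []. Qed.

Lemma FS_step r q M b :
  FS r q M.+1 `&` cyl (rcons r b) = FS (rcons r b) (2 * q - b%:R) M `&` cyl (rcons r b).
Proof.
apply/seteqP; split => y [h1 /[dup] hc /cyl_rcons [hr hb]]; split => //.
  case: h1 => _; rewrite bitsF_S hb /= => hf; split => //.
  by rewrite size_rcons.
case: h1 => _; rewrite size_rcons => hf; split => //.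
by rewrite bitsF_S hb.
Qed.

Lemma fillP0 q bs : q <= 0 -> fillP q bs = false.
Proof.
elim: bs q => [|b bs IH] q hq /=; first by apply/negbTE; rewrite -ltNge; lra.
by apply: IH; case: b => /=; rewrite ?mulr1n ?mulr0n; lra.
Qed.

Lemma fillP1 q bs : 1 <= q -> fillP q bs = true.
Proof.
elim: bs q => [|b bs IH] q hq //=.
by apply: IH; case: b => /=; rewrite ?mulr1n ?mulr0n; lra.
Qed.

Lemma D_FS0 r q M : q <= 0 -> D mu (FS r q M) r = 0.
Proof.
move=> hq; rewrite /D (_ : _ `&` _ = set0) ?mul0r.
  by rewrite /mr measure0 mul0r.
by apply/seteqP; split => // y [[_]]; rewrite fillP0.
Qed.

Lemma D_FS1 r q M : 1 <= q -> D mu (FS r q M) r = 1.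
Proof.
move=> hq; rewrite /D (_ : _ `&` _ = cyl r).
  by rewrite mr_cyl // mulVf ?expf_neq0.
apply/seteqP; split => y; first by case.
by move=> hy; split => //; split => //; rewrite fillP1.
Qed.

Lemma FS_bound M r q : clamp q - 2 ^- M <= D mu (FS r q M) r <= clamp q.
Proof.
elim: M r q => [|M IH] r q.
  rewrite /D.
  have -> : FS r q 0 `&` cyl r = if 1 <= q then cyl r else set0.
    apply/seteqP; split => y.
      by move=> [[hr hf] _]; rewrite /= in hf; rewrite hf.
    by case: ifP => // h hy; split => //; split.
  rewrite expr0 invr1.
  case h: (1 <= q); rewrite /clamp.
    rewrite mr_cyl // mulVf ?expf_neq0 //.
    repeat (case: ltrP => ?); apply/andP; split; lra.
  have -> : mr mu set0 = 0 by rewrite /mr measure0.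
  rewrite mul0r; move: h => /negbT; rewrite -ltNge => h'.
  repeat (case: ltrP => ?); apply/andP; split; lra.
rewrite D_split //; last exact: FS_meas.
have e b : D mu (FS r q M.+1) (rcons r b) = D mu (FS (rcons r b) (2 * q - b%:R) M) (rcons r b).
  by rewrite /D FS_step.
rewrite !e /= ?mulr1n ?mulr0n ?subr0.
have /andP[a1 a2] := IH (rcons r false) (2 * q).
have /andP[b1 b2] := IH (rcons r true) (2 * q - 1).
have hc := clamp2 q.
rewrite exprS invrM ?unitfE ?expf_neq0 //.
have [hq|hq] := lerP q (1/2).
  have -> : D mu (FS (rcons r true) (2 * q - 1) M) (rcons r true) = 0.
    by apply: D_FS0; lra.
  have : clamp (2 * q - 1) = 0 by rewrite /clamp; repeat (case: ltrP => ?); lra.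
  move=> h0; apply/andP; split; lra.
have -> : D mu (FS (rcons r false) (2 * q) M) (rcons r false) = 1.
  by apply: D_FS1; lra.
have : clamp (2 * q) = 1 by rewrite /clamp; repeat (case: ltrP => ?); lra.
move=> h0; apply/andP; split; lra.
Qed.

End Fill.


Definition rootAt (y : cantor) (k : nat) : Prop :=
  (forall i, (i < k)%N -> y (2 * i + 1)%N = true) /\ y (2 * k + 1)%N = false.

Lemma rootAt_uniq y k k' : rootAt y k -> rootAt y k' -> k = k'.
Proof.
move=> [h1 h2] [h1' h2']; case: (ltngtP k k') => // hk.
  by rewrite h1' in h2.
by rewrite h1 in h2'.
Qed.

Definition dataF (y : cantor) n := mkseq (fun i => y (2 * i)%N) n.
Definition Tset : set cantor := [set y | forall i, y (2 * i + 1)%N = true].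

Definition ontree (s : seq bool) := forall i, (2 * i + 1 < size s)%N -> nth false s (2 * i + 1) = true.
Definition dataS (s : seq bool) (j : nat) := mkseq (fun i => nth false s (2 * i)) j.

Section Constr.
Variables (R : realType) (V : seq bool -> R).

Definition inFill (y : cantor) k := fillP (V (dataF y k.+1)) (bitsF y (2 * k + 2) k.+1).
Definition Aop : set cantor := [set y | exists k, rootAt y k /\ inFill y k].
Definition Acl : set cantor := Aop `|` Tset.

Definition Ak k : set cantor := [set y | rootAt y k /\ inFill y k].

Lemma Ak_det k : determined (3 * k + 3) (Ak k).
Proof.
move=> y y' h [[h1 h2] hf]; split; first split.
- by move=> i hi; rewrite -h ?h1 //; lia.
- by rewrite -h //; lia.
move: hf; rewrite /inFill.
have -> : dataF y k.+1 = dataF y' k.+1.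
  apply: (@eq_from_nth _ false); rewrite ?size_mkseq // => i hi.
  by rewrite !nth_mkseq // h //; lia.
by rewrite (@bitsF_det y y') // => i hi; apply: h; lia.
Qed.

Lemma Aop_bigcup : Aop = \bigcup_k Ak k.
Proof. by apply/seteqP; split => y [k]; [move=> h; exists k | exists k]. Qed.

Lemma Tset_bigcap : Tset = \bigcap_i [set y : cantor | y (2 * i + 1)%N = true].
Proof. by apply/seteqP; split => [y h i _|y h i]; [exact: h | exact: h]. Qed.

Lemma Aop_meas : measurable (Aop : set cantorB).
Proof.
rewrite Aop_bigcup; apply: bigcupT_measurable => k.
apply: (@det_meas (3 * k + 3)); exact: Ak_det.
Qed.

Lemma Tset_meas : measurable (Tset : set cantorB).
Proof.
rewrite Tset_bigcap; apply: bigcapT_measurable => i.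
apply: (@det_meas (2 * i + 2)) => y y' h /= <-; rewrite h //; lia.
Qed.

Lemma Acl_meas : measurable (Acl : set cantorB).
Proof. by apply: measurableU; [exact: Aop_meas | exact: Tset_meas]. Qed.


Lemma cyl_root s b y : cyl (rcons (rcons s b) false) y <->
  [/\ cyl s y, y (size s) = b & y (size s).+1 = false].
Proof.
split.
  by move=> /cyl_rcons [/cyl_rcons [h1 h2]]; rewrite size_rcons.
by move=> [h1 h2 h3]; apply/cyl_rcons; rewrite size_rcons; split => //; apply/cyl_rcons.
Qed.

Lemma root_rootAt s j b y : ontree s -> size s = (2 * j)%N ->
  cyl (rcons (rcons s b) false) y -> rootAt y j.
Proof.
move=> ho hs /cyl_root [h1 h2 h3]; split.
  by move=> i hi; rewrite h1 ?ho // hs; lia.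
by rewrite hs in h3; rewrite -h3; congr y; lia.
Qed.

Lemma root_data s j b y : size s = (2 * j)%N ->
  cyl (rcons (rcons s b) false) y -> dataF y j.+1 = rcons (dataS s j) b.
Proof.
move=> hs /cyl_root [h1 h2 h3].
apply: (@eq_from_nth _ false); rewrite ?size_mkseq ?size_rcons ?size_mkseq // => i hi.
rewrite nth_mkseq // nth_rcons size_mkseq.
case: ltnP => hij; first by rewrite nth_mkseq // h1 // hs; lia.
have -> : i = j by lia.
by rewrite eqxx -h2 hs.
Qed.

Lemma Tset_root s j b y : size s = (2 * j)%N ->
  cyl (rcons (rcons s b) false) y -> ~ Tset y.
Proof.
move=> hs /cyl_root [h1 h2 h3] hT; have := hT j.
by rewrite hs in h3; rewrite (_ : (2 * j + 1)%N = (2 * j).+1) ?h3 //; lia.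
Qed.

Lemma root_eq (B : set cantor) s j b : (B = Aop \/ B = Acl) -> ontree s -> size s = (2 * j)%N ->
  B `&` cyl (rcons (rcons s b) false) =
  FS (rcons (rcons s b) false) (V (rcons (dataS s j) b)) j.+1 `&` cyl (rcons (rcons s b) false).
Proof.
move=> hB ho hs.
have hsz : size (rcons (rcons s b) false) = (2 * j + 2)%N by rewrite !size_rcons hs; lia.
have key y : cyl (rcons (rcons s b) false) y -> (B y <-> fillP (V (rcons (dataS s j) b)) (bitsF y (2 * j + 2) j.+1)).
  move=> hy; have hr := root_rootAt ho hs hy; have hd := root_data hs hy.
  have hAop : Aop y <-> fillP (V (rcons (dataS s j) b)) (bitsF y (2 * j + 2) j.+1).
    split.
      by move=> [k [hk hf]]; rewrite -(rootAt_uniq hr hk) /inFill hd in hf.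
    by move=> hf; exists j; split => //; rewrite /inFill hd.
  case: hB => ->; first exact: hAop.
  split; last by move=> /hAop; left.
  by case => [/hAop //|/(Tset_root hs hy)].
apply/seteqP; split => y [h1 h2]; split => //.
  by split => //; rewrite hsz; apply/(key y h2).
by apply/(key y h2); case: h1 => _; rewrite hsz.
Qed.

End Constr.


Section ULemma.
Variables (R : realType) (mu : {measure set cantorB -> \bar R}).
Hypothesis hmu : coin_tossing mu.
Variables (V : seq bool -> R).
Hypothesis hV : forall u, 0 <= V u <= 1.
Variable B : set cantor.
Hypothesis hB : B = Aop V \/ B = Acl V.

Lemma B_meas : measurable (B : set cantorB).
Proof. by case: hB => ->; [exact: Aop_meas | exact: Acl_meas]. Qed.

Lemma ontree_child s j b : ontree s -> size s = (2 * j)%N -> ontree (rcons (rcons s b) true).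
Proof.
move=> ho hs i; rewrite !size_rcons hs => hi; rewrite !nth_rcons ?size_rcons hs.
case: ltnP => h1; last by case: eqP => //; lia.
case: ltnP => h2; first by rewrite ho // hs.
by case: eqP => //; lia.
Qed.

Lemma dataS_child s j b : size s = (2 * j)%N ->
  dataS (rcons (rcons s b) true) j.+1 = rcons (dataS s j) b.
Proof.
move=> hs; apply: (@eq_from_nth _ false); rewrite ?size_mkseq ?size_rcons ?size_mkseq // => i hi.
rewrite nth_mkseq // [RHS]nth_rcons size_mkseq !nth_rcons size_rcons hs.
have -> : (2 * i < (2 * j).+1)%N by lia.
have [hij|hij] := ltnP i j.
  by rewrite ifT ?nth_mkseq //; lia.
have -> : i = j by lia.
by rewrite !ltnn !eqxx.
Qed.

Lemma D_root s j b : ontree s -> size s = (2 * j)%N ->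
  V (rcons (dataS s j) b) - 2 ^- j.+1 <= D mu B (rcons (rcons s b) false) <= V (rcons (dataS s j) b).
Proof.
move=> ho hs.
have -> : D mu B (rcons (rcons s b) false) =
  D mu (FS (rcons (rcons s b) false) (V (rcons (dataS s j) b)) j.+1) (rcons (rcons s b) false).
  by rewrite /D (@root_eq _ V B s j b hB ho hs).
have := FS_bound hmu j.+1 (rcons (rcons s b) false) (V (rcons (dataS s j) b)).
have -> // : clamp (V (rcons (dataS s j) b)) = V (rcons (dataS s j) b).
have /andP[h1 h2] := hV (rcons (dataS s j) b).
rewrite /clamp; repeat (case: ltrP => ?); lra.
Qed.

Lemma D_node s j : ontree s -> size s = (2 * j)%N ->
  D mu B s = (D mu B (rcons (rcons s false) false) + D mu B (rcons (rcons s false) true)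
            + D mu B (rcons (rcons s true) false) + D mu B (rcons (rcons s true) true)) / 4.
Proof.
move=> ho hs; rewrite (D_split hmu s B_meas) (D_split hmu (rcons s false) B_meas) (D_split hmu (rcons s true) B_meas).
by field.
Qed.

Lemma U_lemma k : forall s j (lo hi eps : R), ontree s -> size s = (2 * j)%N ->
  2 ^- j.+1 <= eps -> 0 <= hi ->
  (forall v, (0 < size v <= k)%N -> lo <= V (dataS s j ++ v) <= hi) ->
  (lo - eps) * (1 - 2 ^- k) <= D mu B s <= hi + 2 ^- k.
Proof.
elim: k => [|k IH] s j lo hi eps ho hs he hhi hv.
  have /andP[d0 d1] := D_bounds hmu s B_meas.
  rewrite expr0 invr1 subrr mulr0; apply/andP; split; lra.
rewrite (D_node ho hs).
have hr b : lo - eps <= D mu B (rcons (rcons s b) false) <= hi.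
  have /andP[r1 r2] := D_root b ho hs.
  have /andP[v1 v2] := hv [:: b] isT.
  rewrite cats1 in v1 v2; apply/andP; split; lra.
have hc b : (lo - eps) * (1 - 2 ^- k) <= D mu B (rcons (rcons s b) true) <= hi + 2 ^- k.
  apply: (IH _ j.+1) => //.
  - exact: ontree_child ho hs.
  - by rewrite !size_rcons hs; lia.
  - apply: le_trans he; rewrite lef_pV2 ?posrE ?exprn_gt0 //.
    by rewrite ler_eXn2l // ?ltr1n.
  - move=> v hvs; rewrite dataS_child // cat_rcons; apply: hv; rewrite /=; lia.
have /andP[a1 a2] := hr false; have /andP[b1 b2] := hr true.
have /andP[c1 c2] := hc false; have /andP[d1 d2] := hc true.
have hk : 2 ^- k = 2 * 2 ^- k.+1 :> R.
  by rewrite exprS invrM ?unitfE ?expf_neq0 //; field.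
move: c1 c2 d1 d2; rewrite hk; set P := 2 ^- k.+1 => c1 c2 d1 d2.
clearbody P; apply/andP; split; lra.
Qed.

End ULemma.


Lemma cvg_of_eps (R : realType) (u : nat -> R) L :
  (forall e, 0 < e -> exists N, forall n, (N <= n)%N -> `|u n - L| <= e) -> u @ \oo --> L.
Proof.
move=> H; apply/cvgrPdist_le => e he; have [N hN] := H e he.
by apply: filterS (nbhs_infty_ge N) => n hn; rewrite distrC; exact: hN.
Qed.

Lemma cvg_uniq (R : realType) (u : nat -> R) (L L' : R) : u @ \oo --> L -> u @ \oo --> L' -> L = L'.
Proof. move=> h1 h2; exact: (@cvg_unique R _ (u @ \oo) _ L L' h1 h2). Qed.

Lemma pow2_small (R : realType) (e : R) : 0 < e -> exists K : nat, 2 ^- K <= e.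
Proof.
move=> he; exists (Num.bound (e^-1)).
have he' : 0 <= e^-1 by rewrite invr_ge0 ltW.
have h1 := archi_boundP he'.
set K := Num.bound (e^-1) in h1 *.
have h2 : (K%:R : R) <= 2 ^+ K.
  by rewrite -natrX ler_nat ltnW // ltn_expl.
rewrite -(invrK e) lef_pV2 ?posrE ?exprn_gt0 ?invr_gt0 //; lra.
Qed.

Lemma contract_seq (R : realType) (x : nat -> R) L c J :
  0 <= c -> (forall j, `|x j - L| <= 2) ->
  (forall j, (J <= j)%N -> `|4 * x j - x j.+1 - 3 * L| <= c) ->
  forall N j, (J <= j)%N -> `|x j - L| <= c / 3 + 2 / 4 ^+ N.
Proof.
move=> hc hb hs; elim=> [|N IH] j hj.
  by rewrite expr0 divr1; have := hb j; lra.
have h1 := IH j.+1 (leqW hj); have h2 := hs j hj.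
have h4 : 0 < 4 ^+ N :> R by rewrite exprn_gt0.
rewrite exprS invrM ?unitfE ?gt_eqF //.
move: h1 h2; set a := x j; set b := x j.+1; set t := 2 / 4 ^+ N.
have -> : 2 * ((4 ^+ N)^-1 / 4) = t / 4 :> R by rewrite /t; field; rewrite gt_eqF.
move: (t) => t'.
rewrite !ler_norml => /andP[h1 h1'] /andP[h2 h2']; apply/andP; split; lra.
Qed.


Definition Good (R : realType) (V : seq bool -> R) (w : nat -> bool) (L : R) :=
  forall e, 0 < e -> forall K : nat, exists J, forall j v, (J <= j)%N ->
    (0 < size v <= K)%N -> `|V (mkseq w j ++ v) - L| <= e.

Lemma restrS (z : cantor) n : restr z n.+1 = rcons (restr z n) (z n).
Proof. by rewrite /restr mkseqS. Qed.

Lemma restr_ontree z j : Tset z -> ontree (restr z (2 * j)).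
Proof.
move=> hz i; rewrite size_mkseq => hi; rewrite nth_mkseq //.
Qed.

Lemma restr_data z j : dataS (restr z (2 * j)) j = mkseq (fun i => z (2 * i)%N) j.
Proof.
apply: (@eq_from_nth _ false); rewrite ?size_mkseq // => i hi.
by rewrite !nth_mkseq //; lia.
Qed.

Lemma restr2 z j : Tset z -> restr z (2 * j.+1) = rcons (rcons (restr z (2 * j)) (z (2 * j)%N)) true.
Proof.
move=> hz; rewrite (_ : (2 * j.+1 = (2 * j).+1.+1)%N); last lia.
have h1 := hz j; rewrite (_ : (2 * j + 1 = (2 * j).+1)%N) in h1; last lia.
by rewrite !restrS h1.
Qed.

Lemma pow_small_half (R : realType) (K : nat) : 2 / 4 ^+ K <= 2 * 2 ^- K :> R.
Proof.
have h1 : 1 <= 2 ^+ K :> R by rewrite exprn_ege1 // ler1n.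
have -> : 4 ^+ K = 2 ^+ K * 2 ^+ K :> R by rewrite -exprMn; congr (_ ^+ _); lra.
rewrite invrM ?unitfE ?gt_eqF ?exprn_gt0 //.
have h2 : 0 < (2 ^+ K : R)^-1 by rewrite invr_gt0 exprn_gt0.
have h3 : (2 ^+ K : R)^-1 <= 1 by rewrite invf_le1 ?exprn_gt0.
rewrite mulrA ler_pM2r //; lra.
Qed.

Section Path.
Variables (R : realType) (mu : {measure set cantorB -> \bar R}).
Hypothesis hmu : coin_tossing mu.
Variables (V : seq bool -> R).
Hypothesis hV : forall u, 0 <= V u <= 1.
Variable B : set cantor.
Hypothesis hB : B = Aop V \/ B = Acl V.

Lemma path_density z L : Tset z -> 0 <= L <= 1 -> Good V (fun i => z (2 * i)%N) L ->
  density_is mu B z L.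
Proof.
move=> hz /andP[L0 L1] hG.
rewrite /density_is (_ : dens_ratio mu B z = fun n => D mu B (restr z n)); last first.
  by apply: funext => n; rewrite dens_ratioE.
apply: cvg_of_eps => e0 he0.
set e := e0 / 5; have he : 0 < e by rewrite /e divr_gt0.
have [K hK] := pow2_small he.
have [J1 hJ1] := hG e he K.+1.
set J := maxn J1 K.
set w := fun i => z (2 * i)%N.
set x := fun j => D mu B (restr z (2 * j)).
have hmB := B_meas hB.
have key j : (J <= j)%N ->
  `|4 * x j - x j.+1 - 3 * L| <= 7 * e /\
  `|D mu B (restr z (2 * j).+1) - L| <= (2 * e + `|x j.+1 - L|) / 2.
  move=> hj.
  have hJ1j : (J1 <= j)%N by apply: leq_trans hj; apply: leq_maxl.
  have hKj : (K <= j)%N by apply: leq_trans hj; apply: leq_maxr.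
  set s := restr z (2 * j).
  have ho : ontree s := restr_ontree (j := j) hz.
  have hs : size s = (2 * j)%N by rewrite size_mkseq.
  have hd : dataS s j = mkseq w j := restr_data z j.
  have hpj : 2 ^- j.+1 <= e.
    apply: le_trans hK; rewrite lef_pV2 ?posrE ?exprn_gt0 //.
    by rewrite ler_eXn2l // ?ltr1n //; lia.
  have hF b : `|D mu B (rcons (rcons s b) false) - L| <= 2 * e.
    have /andP[r1 r2] := D_root hmu hV hB b ho hs.
    have := hJ1 j [:: b] hJ1j isT; rewrite -hd cats1.
    rewrite ler_norml => /andP[v1 v2]; rewrite ler_norml; apply/andP; split; lra.
  have hGb b : `|D mu B (rcons (rcons s b) true) - L| <= 3 * e.
    have hc := U_lemma hmu hV hB (k := K) (ontree_child (b := b) ho hs) (j := j.+1) (lo := L - e) (hi := L + e) (eps := e).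
    have /andP[c1 c2] : ((L - e) - e) * (1 - 2 ^- K) <= D mu B (rcons (rcons s b) true) <= (L + e) + 2 ^- K.
      apply: hc.
      - by rewrite !size_rcons hs; lia.
      - apply: le_trans hpj; rewrite lef_pV2 ?posrE ?exprn_gt0 //.
        by rewrite ler_eXn2l // ?ltr1n //; lia.
      - lra.
      - move=> v hv; rewrite dataS_child // hd cat_rcons.
        have := hJ1 j (b :: v) hJ1j; rewrite /=.
        move=> /(_ ltac:(lia)); rewrite ler_norml => /andP[v1 v2]; apply/andP; split; lra.
    have hP : 0 <= 2 ^- K :> R by rewrite invr_ge0 exprn_ge0.
    have hLP : 0 <= (1 - L) * 2 ^- K by rewrite mulr_ge0 // subr_ge0.
    have heP : 0 <= e * 2 ^- K by rewrite mulr_ge0 // ltW.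
    rewrite ler_norml; apply/andP; split; lra.
  have hx : x j = (D mu B (rcons (rcons s false) false) + D mu B (rcons (rcons s false) true)
            + D mu B (rcons (rcons s true) false) + D mu B (rcons (rcons s true) true)) / 4.
    rewrite /x -/s. exact: (@D_node R mu hmu V B hB s j ho hs).
  have hx1 : x j.+1 = D mu B (rcons (rcons s (w j)) true) by rewrite /x restr2.
  have hodd : D mu B (restr z (2 * j).+1) = (D mu B (rcons (rcons s (w j)) false) + x j.+1) / 2.
    by rewrite hx1 restrS (D_split hmu _ hmB).
  split; last first.
    rewrite hodd; have := hF (w j); move: (x j.+1) => X.
    rewrite !ler_norml => /andP[f1 f2]; set Y := `|X - L|.
    have : -Y <= X - L <= Y by rewrite -ler_norml.
    move=> /andP[y1 y2]; apply/andP; split; lra.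
  have := hF false; have := hF true; have := hGb false; have := hGb true.
  rewrite hx hx1; case: (w j); rewrite !ler_norml => /andP[a1 a2] /andP[b1 b2] /andP[c1 c2] /andP[d1 d2];
  apply/andP; split; lra.
have hb j : `|x j - L| <= 2.
  have /andP[d0 d1] := D_bounds hmu (restr z (2 * j)) hmB.
  rewrite /x ler_norml; apply/andP; split; lra.
have hc := @contract_seq R x L (7 * e) J.
have hxj j : (J <= j)%N -> `|x j - L| <= 5 * e.
  move=> hj; have := hc ltac:(lra) hb (fun j hj => (key j hj).1) K j hj.
  have := pow_small_half R K; lra.
exists (2 * J)%N => n hn.
have [j [hnj | hnj]] : exists j, n = (2 * j)%N \/ n = (2 * j).+1.
  by exists n./2; case: (odd n) (odd_double_half n) => <-; [right|left]; lia.
all: subst n.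
- have := hxj j ltac:(lia); rewrite /x /e; lra.
- have := (key j ltac:(lia)).2; have := hxj j.+1 ltac:(lia); rewrite /e; lra.
Qed.

End Path.


Lemma cyl_restrP (y y' : cantor) n : cyl (restr y n) y' -> forall i, (i < n)%N -> y' i = y i.
Proof. by move=> h i hi; rewrite h ?size_mkseq // nth_mkseq. Qed.

Lemma rootAt_det y y' k : (forall i, (i < 3 * k + 3)%N -> y i = y' i) -> rootAt y k -> rootAt y' k.
Proof.
move=> h [h1 h2]; split; first by move=> i hi; rewrite -h ?h1 //; lia.
by rewrite -h //; lia.
Qed.

Lemma exists_root y : ~ Tset y -> exists k, rootAt y k.
Proof.
move=> hT.
have hex : exists i, ~~ y (2 * i + 1)%N.
  apply/not_existsP => hn; apply: hT => i; have := hn i; by case: (y _).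
case: (ex_minnP hex) => k hk hmin; exists k; split; last by move: hk; case: (y _).
move=> i hi; apply/negPn/negP => hni; have := hmin i hni; lia.
Qed.

Section RootPts.
Variables (R : realType) (V : seq bool -> R).
Variable B : set cantor.
Hypothesis hB : B = Aop V \/ B = Acl V.

Lemma B_sub_Aop y : B y -> ~ Tset y -> Aop V y.
Proof. by case: hB => -> //; case. Qed.

Lemma Aop_sub_B y : Aop V y -> B y.
Proof. by case: hB => ->; [|left]. Qed.

Lemma root_local y k : rootAt y k -> forall y', (forall i, (i < 3 * k + 3)%N -> y i = y' i) ->
  (B y' <-> inFill V y k).
Proof.
move=> hr y' h; have hr' := rootAt_det h hr.
have hT : ~ Tset y'.
  by move=> hT; move: hr' => [_]; rewrite hT.
split.
  move=> /(B_sub_Aop) /(_ hT) [k' [hk' hf]].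
  rewrite -(rootAt_uniq hr' hk') in hf.
  have : Ak V k y' by [].
  by move=> /(Ak_det (y' := y)) => /(_ (fun i hi => esym (h i hi))) [].
move=> hf; apply: Aop_sub_B; exists k; split => //.
by have [] := Ak_det h (conj hr hf).
Qed.

End RootPts.

Section RootDens.
Variables (R : realType) (mu : {measure set cantorB -> \bar R}).
Hypothesis hmu : coin_tossing mu.
Variables (V : seq bool -> R).
Variable B : set cantor.
Hypothesis hB : B = Aop V \/ B = Acl V.

Lemma root_density y k : rootAt y k -> density_is mu B y (if inFill V y k then 1 else 0).
Proof.
move=> hr; rewrite /density_is (_ : dens_ratio mu B y = fun n => D mu B (restr y n)); last first.
  by apply: funext => n; rewrite dens_ratioE.
apply: cvg_of_eps => e he; exists (3 * k + 3)%N => n hn.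
have hloc y' : cyl (restr y n) y' -> (B y' <-> inFill V y k).
  move=> hy'; apply: (root_local hB hr) => i hi; rewrite (cyl_restrP hy') //; lia.
rewrite /D; case hf: (inFill V y k) => /=.
  have -> : B `&` cyl (restr y n) = cyl (restr y n).
    apply/seteqP; split => y'; first by case.
    by move=> hy'; split => //; apply/(hloc y' hy'); rewrite hf.
  by rewrite mr_cyl // mulVf ?expf_neq0 // subrr normr0 ltW.
have -> : B `&` cyl (restr y n) = set0.
  apply/seteqP; split => // y' [hb hy'].
  by have := (hloc y' hy').1 hb; rewrite hf.
by rewrite /mr measure0 mul0r subrr normr0 ltW.
Qed.

End RootDens.

Lemma Aop_open (R : realType) (V : seq bool -> R) : c_open (Aop V).
Proof.
move=> y [k [hr hf]]; exists (3 * k + 3)%N => y' hy'.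
have := Ak_det (y := y) (y' := y') (V := V) (k := k).
move=> /(_ (fun i hi => esym (cyl_restrP hy' hi)) (conj hr hf)) hk.
by exists k.
Qed.

Lemma Acl_closed (R : realType) (V : seq bool -> R) : c_closed (Acl V).
Proof.
move=> y hy.
have hT : ~ Tset y by move=> h; apply: hy; right.
have [k hr] := exists_root hT.
exists (3 * k + 3)%N => y' hy' hB'.
have hloc := root_local (B := Acl V) (or_intror erefl) hr (y' := y').
have := (hloc (fun i hi => esym (cyl_restrP hy' (i := i) ltac:(lia)))).1 hB'.
move=> hf; apply: hy; left; by exists k.
Qed.


Definition extN (t : seq nat) : nat -> nat := fun i => nth 0%N t i.

Section Dec.
Variables (R : realType) (f : (nat -> nat) -> R).

Definition Vf (u : seq bool) : R :=
  if (size u <= 1)%N then (if u == [:: true] then 1 else 0)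
  else f (extN (dec (take (size u)./2 u))).

Lemma take_prefix (w : nat -> bool) P j v h : (P <= j)%N -> (P <= h)%N ->
  exists r, take h (mkseq w j ++ v) = mkseq w P ++ r.
Proof.
move=> hPj hPh; rewrite -(subnKC hPj) mkseq_add -catA take_cat size_mkseq ltnNge hPh /=.
by eexists.
Qed.

Lemma Good_caseB (w : nat -> bool) (x : nat -> nat) :
  baire_continuous f ->
  (forall j m, (m < size (dec (mkseq w j)))%N -> nth 0%N (dec (mkseq w j)) m = x m) ->
  (forall n0, exists P, (n0 <= size (dec (mkseq w P)))%N) ->
  Good Vf w (f x).
Proof.
move=> hf hco hub e he K.
have [n0 hn0] := hf x e he.
have [P hP] := hub n0.
exists (2 * P + 2)%N => j v hj hv.
have hsz : size (mkseq w j ++ v) = (j + size v)%N by rewrite size_cat size_mkseq.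
rewrite /Vf hsz ifF; last by apply/negbTE; lia.
have [r hr] := @take_prefix w P j v (j + size v)./2 ltac:(lia) ltac:(lia).
rewrite hr; have [t ht] := dec_prefix (mkseq w P) r.
rewrite ht; apply: ltW; apply: hn0 => i hi.
by rewrite /extN nth_cat ifT ?hco //; lia.
Qed.

Lemma mkseq_true n : mkseq (fun _ => true) n = nseq n true.
Proof. by elim: n => // n IH; rewrite mkseqS IH -[in RHS]addn1 nseqD cats1. Qed.

Lemma Good_caseA (w : nat -> bool) P : (forall i, (P <= i)%N -> w i = true) ->
  Good Vf w (f (extN (dec (mkseq w P)))).
Proof.
move=> hw e he K; exists (2 * P + K + 2)%N => j v hj hv.
have hsz : size (mkseq w j ++ v) = (j + size v)%N by rewrite size_cat size_mkseq.
rewrite /Vf hsz ifF; last by apply/negbTE; lia.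
set h := ((j + size v)./2)%N.
have hh1 : (P <= h)%N by rewrite /h; lia.
have hh2 : (h <= j)%N by rewrite /h; lia.
rewrite takel_cat ?size_mkseq // take_mkseq' //.
rewrite -(subnKC hh1) mkseq_add.
rewrite (_ : mkseq _ (h - P) = mkseq (fun _ => true) (h - P)); last first.
  by apply: eq_mkseq => i; rewrite hw //; lia.
by rewrite mkseq_true dec_true subrr normr0 ltW.
Qed.

End Dec.

Lemma count_mono (w : nat -> bool) a b : (a <= b)%N ->
  (count negb (mkseq w a) <= count negb (mkseq w b))%N.
Proof. by move=> h; rewrite -(subnKC h) mkseq_add count_cat leq_addr. Qed.

Lemma dec_coh (w : nat -> bool) j1 j2 m : (m < size (dec (mkseq w j1)))%N ->
  (m < size (dec (mkseq w j2)))%N -> nth 0%N (dec (mkseq w j1)) m = nth 0%N (dec (mkseq w j2)) m.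
Proof.
wlog h : j1 j2 / (j1 <= j2)%N.
  move=> H h1 h2; case: (leqP j1 j2) => hj; first exact: H.
  by rewrite (H j2 j1) // ltnW.
move=> h1 h2; rewrite -(subnKC h) mkseq_add.
have [t ->] := dec_prefix (mkseq w j1) (mkseq (fun i => w (j1 + i)%N) (j2 - j1)).
by rewrite nth_cat h1.
Qed.

Section Dec2.
Variables (R : realType) (f : (nat -> nat) -> R).
Hypothesis hf : baire_continuous f.

Lemma all_Good (w : nat -> bool) : exists x, Good (Vf f) w (f x).
Proof.
have [[P hP]|hn] := pselect (exists P, forall i, (P <= i)%N -> w i = true).
  by exists (extN (dec (mkseq w P))); apply: Good_caseA.
have hinf : forall P, exists i, (P <= i)%N /\ w i = false.
  move=> P; apply: contra_notP hn => hn; exists P => i hi.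
  apply/negPn/negP => hwi; apply: hn; exists i; split => //; exact: negbTE.
have hub : forall m, exists j, (m < size (dec (mkseq w j)))%N.
  elim=> [|m [j hj]].
    have [i [_ hi]] := hinf 0%N; exists i.+1.
    by rewrite dec_size mkseqS -cats1 count_cat hi /=; lia.
  have [i [hji hi]] := hinf j; exists i.+1.
  rewrite dec_size mkseqS -cats1 count_cat hi /=.
  have := count_mono w hji; rewrite -!dec_size; lia.
pose J m := projT1 (cid (hub m)).
have hJ m : (m < size (dec (mkseq w (J m))))%N := projT2 (cid (hub m)).
exists (fun m => nth 0%N (dec (mkseq w (J m))) m).
apply: Good_caseB => //.
  by move=> j m hm; apply: dec_coh.
move=> n0; case: n0 => [|n0]; first by exists 0%N.
by have [j hj] := hub n0; exists j.
Qed.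

Definition wx (x : nat -> nat) : nat -> bool := fun i => nth false (enc (mkseq x i.+1)) i.

Lemma wx_prefix x N j : (j <= N)%N -> mkseq (wx x) j = take j (enc (mkseq x N)).
Proof.
move=> hjN.
have hs : (N <= size (enc (mkseq x N)))%N by have := size_enc (mkseq x N); rewrite size_mkseq.
apply: (@eq_from_nth _ false); rewrite ?size_mkseq ?size_takel //; try lia.
move=> i hi; rewrite nth_mkseq // nth_take // /wx.
have hiN : (i.+1 <= N)%N by lia.
rewrite -(subnKC hiN) mkseq_add enc_cat nth_cat ifT //.
by have := size_enc (mkseq x i.+1); rewrite size_mkseq.
Qed.

Lemma surj_Good x : Good (Vf f) (wx x) (f x).
Proof.
apply: Good_caseB => //.
  move=> j m; rewrite (wx_prefix x (leqnn j)) => hm.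
  have := dec_prefix (take j (enc (mkseq x j))) (drop j (enc (mkseq x j))).
  rewrite cat_take_drop dec_enc => -[t ht].
  have hsz : (size (dec (take j (enc (mkseq x j)))) <= j)%N.
    by have := f_equal size ht; rewrite size_cat size_mkseq; lia.
  have hmj : (m < j)%N by lia.
  by rewrite -(nth_mkseq 0%N x hmj) [in RHS]ht nth_cat hm.
move=> n0; exists (size (enc (mkseq x n0))).
have hle : (n0 <= size (enc (mkseq x n0)))%N by have := size_enc (mkseq x n0); rewrite size_mkseq.
rewrite (wx_prefix x (leqnn _)).
set S := size (enc (mkseq x n0)).
have -> : mkseq x S = mkseq x n0 ++ mkseq (fun i => x (n0 + i)%N) (S - n0) by rewrite -mkseq_add subnKC.
by rewrite enc_cat take_size_cat // dec_enc size_mkseq.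
Qed.

End Dec2.


Lemma Good_ext (R : realType) (V : seq bool -> R) w w' L : w =1 w' -> Good V w L -> Good V w' L.
Proof.
move=> h hG e he K; have [J hJ] := hG e he K; exists J => j v hj hv.
by rewrite -(eq_mkseq h); apply: hJ.
Qed.

Section Generic.
Variables (R : realType) (mu : {measure set cantorB -> \bar R}).
Hypothesis hmu : coin_tossing mu.
Variables (V : seq bool -> R) (S : set R).
Hypothesis hV : forall u, 0 <= V u <= 1.
Hypothesis hV1 : V [:: true] = 1.
Hypothesis hV0 : V [:: false] = 0.
Hypothesis hall : forall w, exists L, ([set 0; 1] `|` S) L /\ 0 <= L <= 1 /\ Good V w L.
Hypothesis hsurj : forall s, S s -> exists w, Good V w s.
Hypothesis hS01 : forall s, S s -> 0 <= s <= 1.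
Variable B : set cantor.
Hypothesis hB : B = Aop V \/ B = Acl V.

Lemma dens_cases z : exists l, density_is mu B z l /\ ([set 0; 1] `|` S) l.
Proof.
have [hT|hT] := pselect (Tset z).
  have [L [hL [hL01 hG]]] := hall (fun i => z (2 * i)%N).
  by exists L; split => //; apply: path_density.
have [k hk] := exists_root hT.
exists (if inFill V z k then 1 else 0); split; first exact: root_density.
by left; case: (inFill V z k); [right|left].
Qed.

Lemma generic_solid : solid mu B.
Proof. by move=> z hb; have [l [hl _]] := dens_cases z; apply: hb; exists l. Qed.

Lemma generic_ran : ran_density mu B = [set 0; 1] `|` S.
Proof.
apply/seteqP; split => l.
  move=> [z hz]; have [l' [hl' hS]] := dens_cases z.
  by rewrite (cvg_uniq hz hl').
case => [[->|->]|hs].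
- exists (fun _ => false).
  have hr : rootAt (fun _ => false) 0 by split.
  have := root_density hmu hB hr.
  rewrite /inFill (_ : dataF _ 1 = [:: false]) // hV0 fillP0 //.
- exists (fun i => i == 0%N).
  have hr : rootAt (fun i => i == 0%N) 0 by split.
  have := root_density hmu hB hr.
  rewrite /inFill (_ : dataF _ 1 = [:: true]) // hV1 fillP1 //.
- have [w hw] := hsurj hs.
  exists (fun i => if odd i then true else w i./2).
  apply: path_density => //.
  + move=> i; have -> : (2 * i + 1 = (i.*2).+1)%N by rewrite -muln2; lia.
    by rewrite /= odd_double.
  + exact: hS01.
  + apply: Good_ext hw => i /=; have -> : (2 * i = i.*2)%N by rewrite -muln2; lia.
    by rewrite odd_double doubleK.
Qed.

End Generic.


Lemma main_generic (R : realType) (mu : {measure set cantorB -> \bar R})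
  (hmu : coin_tossing mu) (V : seq bool -> R) (S : set R) :
  (forall u, 0 <= V u <= 1) -> V [:: true] = 1 -> V [:: false] = 0 ->
  (forall w, exists L, ([set 0; 1] `|` S) L /\ 0 <= L <= 1 /\ Good V w L) ->
  (forall s, S s -> exists w, Good V w s) ->
  (forall s, S s -> 0 <= s <= 1) ->
  (exists A : set cantor, c_closed A /\ solid mu A /\
      ran_density mu A = [set 0; 1] `|` S) /\
  (exists A' : set cantor, c_open A' /\ solid mu A' /\
      ran_density mu A' = [set 0; 1] `|` S).
Proof.
move=> hV hV1 hV0 hall hsurj hS01; split.
  exists (Acl V); split; first exact: Acl_closed.
  have hB : Acl V = Aop V \/ Acl V = Acl V by right.
  by split; [apply: generic_solid hB | apply: generic_ran hB].
exists (Aop V); split; first exact: Aop_open.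
have hB : Aop V = Aop V \/ Aop V = Acl V by left.
by split; [apply: generic_solid hB | apply: generic_ran hB].
Qed.

Theorem theorem5p1 (R : realType) (mu : {measure set cantorB -> \bar R})
  (hmu : coin_tossing mu) (S : set R)
  (hS : analytic S) (hS01 : S `<=` `]0, 1[) :
  (exists A : set cantor, c_closed A /\ solid mu A /\
      ran_density mu A = [set 0; 1] `|` S) /\
  (exists A' : set cantor, c_open A' /\ solid mu A' /\
      ran_density mu A' = [set 0; 1] `|` S).
Proof.
have hS01' s : S s -> 0 <= s <= 1.
  by move=> /hS01; rewrite /= in_itv /= => /andP[h1 h2]; apply/andP; split; apply: ltW.
case: hS => [->|[f [hf hrange]]].
  pose V0 := fun u : seq bool => if u == [:: true] then (1 : R) else 0.
  apply: (@main_generic R mu hmu V0).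
  - by move=> u; rewrite /V0; case: ifP => _; apply/andP; split.
  - by rewrite /V0 eqxx.
  - by [].
  - move=> w; exists 0; split; first by left; left.
    split; first by apply/andP; split.
    move=> e he K; exists 1%N => j v hj hv.
    rewrite /V0 ifF ?subrr ?normr0 ?ltW //.
    apply/negbTE/eqP => h; have := f_equal size h; rewrite size_cat size_mkseq /=; lia.
  - by move=> s [].
  - by move=> s [].
have hfS y : S (f y) by rewrite -hrange; exists y.
apply: (@main_generic R mu hmu (Vf f)).
- move=> u; rewrite /Vf; case: ifP => _.
    by case: ifP => _; apply/andP; split.
  exact: hS01' (hfS _).
- by [].
- by [].
- move=> w; have [x hx] := all_Good hf w; exists (f x); split; first by right.
  by split => //; apply: hS01'.
- move=> s; rewrite -hrange => -[x _ <-]; exists (wx x); exact: surj_Good.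
- exact: hS01'.
Qed.
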